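(* Let $G$ and $H$ be nontrivial finite connected simple graphs and let $\ell\geq 2$ be an integer. (1) If $S$ is an $\{\ell\}$-resolving set of $G\Box H$, then the projection of $S$ onto $G$ is an $\{\ell\}$-resolving set of $G$ and the projection of $S$ onto $H$ is an $\{\ell\}$-resolving set of $H$. (2) If $S$ is an $\{\ell\}$-resolving set of $G$ and $S'$ is an $\ell$-solid-resolving set of $H$, then $S\times S'=\{ss': s\in S, s'\in S'\}$ is an $\{\ell\}$-resolving set of $G\Box H$; symmetrically, if $S$ is an $\{\ell\}$-resolving set of $H$ and $S'$ is an $\ell$-solid-resolving set of $G$, then $S'\times S$ is an $\{\ell\}$-resolving set of $G\Box H$. (3) $\max\{\beta_\ell(G),\beta_\ell(H)\}\leq\beta_\ell(G\Box H)\leq\min\{\beta_\ell(G)\cdot\beta_\ell^s(H),\ \beta_\ell^s(G)\cdot\beta_\ell(H)\}$.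
   Context: The Cartesian product $G\Box H$ has vertex set $\{av: a\in V(G), v\in V(H)\}$, with distinct $av,bu$ adjacent iff ($a=b$ and $uv\in E(H)$) or ($ab\in E(G)$ and $u=v$). The projection of $X\subseteq V(G\Box H)$ onto $G$ is $\{x_1: x_1x_2\in X\}$, and onto $H$ is $\{x_2: x_1x_2\in X\}$. For a graph, $d$ is the shortest-path distance, $d(s,X)=\min_{x\in X}d(s,x)$ for nonempty $X$, and $\mathcal{D}_S(X)=(d(s_1,X),\dots,d(s_k,X))$ for $S=\{s_1,\dots,s_k\}$. $S$ is an $\{\ell\}$-resolving set if $\mathcal{D}_S(X)\neq\mathcal{D}_S(Y)$ for all distinct nonempty vertex sets $X,Y$ with $|X|,|Y|\leq\ell$; $S$ is an $\ell$-solid-resolving set if $\mathcal{D}_S(X)\neq\mathcal{D}_S(Y)$ for all distinct nonempty vertex sets $X,Y$ with $|X|\leq\ell$ ($Y$ arbitrary). $\beta_\ell$ and $\beta_\ell^s$ are the minimum sizes of such sets. *)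

(* Defs.v *)
From mathcomp Require Import all_boot.
Set Implicit Arguments. Unset Strict Implicit. Unset Printing Implicit Defensive.

Section Graphs.
Variable T : finType.
Variable e : rel T.

Definition simple_graph : Prop := symmetric e /\ irreflexive e.
Definition gconnected : Prop := forall x y : T, connect e x y.

Definition ball (x : T) (n : nat) : {set T} :=
  iter n (fun B : {set T} => B :|: [set y | [exists z in B, e z y]]) [set x].

(* shortest-path distance: least n with y in ball x n (#|T| if unreachable,
   which never happens in a connected graph) *)
Definition dist (x y : T) : nat :=
  find (fun n => y \in ball x n) (iota 0 #|T|).

(* d(s, X) = min_{x in X} d(s, x), for nonempty X *)
Definition dist_set (s : T) (X : {set T}) : nat :=
  \big[minn/#|T|]_(x in X) dist s x.

Definition separates (S X Y : {set T}) : bool :=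
  [exists s in S, dist_set s X != dist_set s Y].

Definition lresolving (l : nat) (S : {set T}) : bool :=
  [forall X : {set T}, [forall Y : {set T},
    [&& X != set0, Y != set0, X != Y, #|X| <= l & #|Y| <= l] ==> separates S X Y]].

Definition lsolid (l : nat) (S : {set T}) : bool :=
  [forall X : {set T}, [forall Y : {set T},
    [&& X != set0, Y != set0, X != Y & #|X| <= l] ==> separates S X Y]].

(* beta_l and beta_l^s: minimum sizes (the whole vertex set is always such a set) *)
Definition beta (l : nat) : nat :=
  \big[minn/#|T|.+1]_(S : {set T} | lresolving l S) #|S|.
Definition beta_s (l : nat) : nat :=
  \big[minn/#|T|.+1]_(S : {set T} | lsolid l S) #|S|.
End Graphs.

Definition cartprod (T1 T2 : finType) (e1 : rel T1) (e2 : rel T2) : rel (T1 * T2) :=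
  fun x y => ((x.1 == y.1) && e2 x.2 y.2) || (e1 x.1 y.1 && (x.2 == y.2)).

Definition proj1s (T1 T2 : finType) (S : {set T1 * T2}) : {set T1} := [set x.1 | x in S].
Definition proj2s (T1 T2 : finType) (S : {set T1 * T2}) : {set T2} := [set x.2 | x in S].

(* Main.v *)
Require Import Defs.
From mathcomp Require Import all_boot zify.
Set Implicit Arguments. Unset Strict Implicit. Unset Printing Implicit Defensive.

Section Gen.
Variable T : finType.
Variable e : rel T.

Lemma ball0 x : ball e x 0 = [set x].
Proof. by []. Qed.

Lemma in_ballS x n y :
  (y \in ball e x n.+1) = (y \in ball e x n) || [exists z in ball e x n, e z y].
Proof. by rewrite /ball iterS inE inE. Qed.

Lemma ball_sub x n : ball e x n \subset ball e x n.+1.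
Proof. by apply/subsetP=> y hy; rewrite in_ballS hy. Qed.

Lemma ball_mono x m n : m <= n -> ball e x m \subset ball e x n.
Proof.
elim: n => [|n IH]; first by rewrite leqn0 => /eqP ->.
rewrite leq_eqVlt => /orP [/eqP -> //| hm].
exact: subset_trans (IH hm) (ball_sub x n).
Qed.

Lemma ball_trans x y z i j : y \in ball e x i -> z \in ball e y j -> z \in ball e x (i + j).
Proof.
move=> hy; elim: j z => [|j IH] z; first by rewrite ball0 inE addn0 => /eqP ->.
rewrite in_ballS => /orP [hz|/existsP [w /andP [hw hwz]]].
  by rewrite addnS; apply: (subsetP (ball_sub _ _)); apply: IH.
by rewrite addnS in_ballS; apply/orP; right; apply/existsP; exists w; rewrite IH.
Qed.

Lemma ball_step x y : e x y -> y \in ball e x 1.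
Proof. by move=> h; rewrite in_ballS; apply/orP; right; apply/existsP; exists x; rewrite ball0 inE eqxx. Qed.

Lemma ball_stable x k : ball e x k = ball e x k.+1 -> forall m, k <= m -> ball e x m = ball e x k.
Proof.
move=> hk; elim=> [|m IH]; first by rewrite leqn0 => /eqP ->.
rewrite leq_eqVlt => /orP [/eqP <- //|hm].
by rewrite /ball iterS -/(ball e x m) IH.
Qed.

Lemma ball_grow x k : (exists2 j, j <= k & ball e x j = ball e x j.+1) \/ k.+1 <= #|ball e x k|.
Proof.
elim: k => [|k [[j hj hb]|hc]]; first by right; rewrite ball0 cards1.
  by left; exists j => //; apply: leqW.
have [hb|hb] := eqVneq (ball e x k) (ball e x k.+1); first by left; exists k.
right; apply: leq_ltn_trans hc _; apply: proper_card.
by rewrite properEneq hb ball_sub.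
Qed.

Lemma ball_max x n y : y \in ball e x n -> y \in ball e x #|T|.-1.
Proof.
move=> hy; case: (ball_grow x #|T|.-1) => [[j hj hb]|hc].
  have hs := ball_stable hb.
  apply: (subsetP (ball_mono x hj)).
  have [hn|hn] := leqP j n; first by rewrite -(hs n hn).
  by apply: (subsetP (ball_mono x (ltnW hn))).
have hT : 0 < #|T| by apply/card_gt0P; exists x.
have : ball e x #|T|.-1 = setT.
  by apply/eqP; rewrite eqEcard subsetT cardsT (leq_trans _ hc) // prednK.
by move->; rewrite inE.
Qed.

Hypothesis reach : forall x y : T, exists n, y \in ball e x n.

Lemma dist_le x y n : (dist e x y <= n) = (y \in ball e x n).
Proof.
have hT : 0 < #|T| by apply/card_gt0P; exists x.
have [n0 hn0] := reach x y.
have hm := ball_max hn0.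
set P := fun n => y \in ball e x n.
have hhas : has P (iota 0 #|T|).
  apply/hasP; exists #|T|.-1; [by rewrite mem_iota add0n /= ltn_predL | exact: hm].
have hlt : dist e x y < #|T| by move: hhas; rewrite has_find size_iota.
have hP : y \in ball e x (dist e x y).
  by have := nth_find 0 hhas; rewrite -/(dist e x y) nth_iota // add0n.
apply/idP/idP => [hd|hy]; first exact: (subsetP (ball_mono x hd)).
rewrite leqNgt; apply/negP => hnd.
have [hnT|hnT] := ltnP n #|T|.
  by have := before_find 0 hnd; rewrite nth_iota // add0n /P hy.
by move: (leq_trans hlt hnT); rewrite ltnNge ltnW.
Qed.

Lemma dist_eq0 x y : (dist e x y == 0) = (x == y).
Proof. by rewrite -leqn0 dist_le ball0 inE eq_sym. Qed.

Lemma dist_leT x y : dist e x y <= #|T|.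
Proof. by rewrite /dist; move: (find_size (fun n => y \in ball e x n) (iota 0 #|T|)); rewrite size_iota. Qed.

End Gen.

Lemma bigmin_le_nat (I : finType) (P : pred I) (F : I -> nat) d i :
  P i -> \big[minn/d]_(j | P j) F j <= F i.
Proof.
move=> hi; have: i \in index_enum I by rewrite mem_index_enum.
elim: (index_enum I) => [//|a r IH]; rewrite inE big_cons => /orP [/eqP <-|hr].
  by rewrite hi geq_minl.
by case: ifP => _; [rewrite geq_min IH ?orbT | apply: IH].
Qed.

Lemma bigmin_wit (I : finType) (P : pred I) (F : I -> nat) d i0 :
  P i0 -> F i0 <= d ->
  exists i, [/\ P i, \big[minn/d]_(j | P j) F j = F i & forall j, P j -> F i <= F j].
Proof.
move=> hi0 hd; case: (arg_minnP F hi0) => i hi hmin.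
exists i; split => //; apply/eqP; rewrite eqn_leq bigmin_le_nat //=.
apply: (big_ind (fun v => F i <= v)).
- exact: leq_trans (hmin _ hi0) hd.
- by move=> a b ha hb; rewrite leq_min ha hb.
- by move=> j hj; apply: hmin.
Qed.

Section DS.
Variable T : finType.
Variable e : rel T.

Lemma dist_set_wit s (X : {set T}) : X != set0 ->
  exists x, [/\ x \in X, dist_set e s X = dist e s x & forall y, y \in X -> dist e s x <= dist e s y].
Proof.
case/set0Pn => x0 hx0.
have [x [hx h1 h2]] := bigmin_wit (P := fun y => y \in X) (F := fun y => dist e s y) hx0 (dist_leT e s x0).
by exists x; split.
Qed.

Lemma dist_set_le s (X : {set T}) x : x \in X -> dist_set e s X <= dist e s x.
Proof. by move=> hx; apply: bigmin_le_nat. Qed.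

Lemma dist_set_eq s (X : {set T}) x : x \in X -> (forall y, y \in X -> dist e s x <= dist e s y) ->
  dist_set e s X = dist e s x.
Proof.
move=> hx hm; have [|z [hz -> hmin]] := dist_set_wit s (X := X); first by apply/set0Pn; exists x.
by apply/eqP; rewrite eqn_leq hm // hmin.
Qed.
End DS.

Section Sep.
Variable T : finType.
Variable e : rel T.

Lemma sep_pt w (X Y : {set T}) p : X != set0 -> p \in Y ->
  (forall q, q \in X -> dist e w p < dist e w q) -> dist_set e w X != dist_set e w Y.
Proof.
move=> hX hp hq; have [x [hx -> _]] := dist_set_wit e w hX.
by rewrite neq_ltn (leq_ltn_trans (dist_set_le e w hp) (hq x hx)) orbT.
Qed.

Lemma separatesC (S X Y : {set T}) : separates e S X Y = separates e S Y X.
Proof. by apply/existsP/existsP => -[s /andP [hs h]]; exists s; rewrite hs eq_sym. Qed.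

Lemma separates_pt (S X Y : {set T}) w p : w \in S -> X != set0 -> p \in Y ->
  (forall q, q \in X -> dist e w p < dist e w q) -> separates e S X Y.
Proof. by move=> hw hX hp hq; apply/existsP; exists w; rewrite hw (sep_pt hX hp hq). Qed.

Lemma sep_add (S A : {set T}) a : A != set0 -> a \notin A -> separates e S A (a |: A) ->
  exists2 s, s \in S & forall x, x \in A -> dist e s a < dist e s x.
Proof.
move=> hA ha /existsP [s /andP [hs hne]]; exists s => // x hx.
have haA : a |: A != set0 by apply/set0Pn; exists a; rewrite setU11.
have [z [hz hze hzm]] := dist_set_wit e s haA.
have [y [hy hye hym]] := dist_set_wit e s hA.
have hyA : y \in a |: A by rewrite setU1r.
move: hz; rewrite in_setU1 => /orP [/eqP hza|hzA].
  subst z; apply: leq_trans (hym _ hx).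
  rewrite ltn_neqAle hzm // andbT; apply: contra hne => /eqP h.
  by rewrite hze hye h.
have h1 := hym _ hzA; have h2 := hzm _ hyA.
by move: hne; rewrite hze hye (@anti_leq (dist e s z) (dist e s y)) ?h1 ?h2 ?eqxx.
Qed.

Lemma lres_app l (S X Y : {set T}) : lresolving e l S -> X != set0 -> Y != set0 -> X != Y ->
  #|X| <= l -> #|Y| <= l -> separates e S X Y.
Proof.
move=> /forallP /(_ X) /forallP /(_ Y) /implyP h hX hY hXY hx hy.
by apply: h; rewrite hX hY hXY hx hy.
Qed.

Lemma lsol_app l (S X Y : {set T}) : lsolid e l S -> X != set0 -> Y != set0 -> X != Y ->
  #|X| <= l -> separates e S X Y.
Proof.
move=> /forallP /(_ X) /forallP /(_ Y) /implyP h hX hY hXY hx.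
by apply: h; rewrite hX hY hXY hx.
Qed.

Lemma addA_ne (A : {set T}) a : a \notin A -> A != a |: A.
Proof. by move=> ha; apply/eqP => h; move: ha; rewrite h setU11. Qed.

Lemma addA_nz (A : {set T}) a : a |: A != set0.
Proof. by apply/set0Pn; exists a; rewrite setU11. Qed.

Lemma lres_P l (S : {set T}) : lresolving e l S -> forall A a, A != set0 -> a \notin A -> #|A| < l ->
  exists2 s, s \in S & forall x, x \in A -> dist e s a < dist e s x.
Proof.
move=> hS A a hA ha hl; apply: sep_add => //; apply: (lres_app hS) => //.
- exact: addA_nz.
- exact: addA_ne.
- exact: ltnW.
- by rewrite cardsU1 ha.
Qed.

Lemma lsol_P l (S : {set T}) : lsolid e l S -> forall A a, A != set0 -> a \notin A -> #|A| <= l ->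
  exists2 s, s \in S & forall x, x \in A -> dist e s a < dist e s x.
Proof.
move=> hS A a hA ha hl; apply: sep_add => //; apply: (lsol_app hS) => //.
- exact: addA_nz.
- exact: addA_ne.
Qed.

Lemma pick_gen (S : {set T}) k :
  S != set0 ->
  (forall A a, A != set0 -> a \notin A -> #|A| <= k ->
     exists2 s, s \in S & forall x, x \in A -> dist e s a < dist e s x) ->
  forall (A : {set T}) a, #|A :\ a| <= k ->
  exists2 s, s \in S & forall x, x \in A -> x != a -> dist e s a < dist e s x.
Proof.
move=> hS hP A a hk; have [h0|hn] := eqVneq (A :\ a) set0.
  case/set0Pn: hS => s hs; exists s => // x hx hxa.
  by move: h0 => /eqP; rewrite -subset0 => /subsetP /(_ x); rewrite !inE hxa hx => /(_ isT).
have haa : a \notin A :\ a by rewrite !inE eqxx.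
have [s hs hm] := hP (A :\ a) a hn haa hk.
by exists s => // x hx hxa; apply: hm; rewrite !inE hxa hx.
Qed.

Lemma sep_nz (S X Y : {set T}) : separates e S X Y -> S != set0.
Proof. by case/existsP => s /andP [hs _]; apply/set0Pn; exists s. Qed.

Lemma two_sets : 1 < #|T| -> exists X Y : {set T}, [/\ X != set0, Y != set0, X != Y, #|X| <= 1 & #|Y| <= 1].
Proof.
move=> /card_gt1P [x [y [_ _ hxy]]]; exists [set x], [set y].
rewrite !cards1; split => //; try by apply/set0Pn; eexists; rewrite inE.
by apply: contra hxy => /eqP h; rewrite (set1_inj h).
Qed.
End Sep.

Section Prod.
Variables T1 T2 : finType.
Variable e1 : rel T1.
Variable e2 : rel T2.
Notation eP := (cartprod e1 e2).

Lemma ballP_l a u i b : b \in ball e1 a i -> (b, u) \in ball eP (a, u) i.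
Proof.
elim: i b => [|i IH] b; first by rewrite !ball0 !inE => /eqP ->.
rewrite in_ballS => /orP [hb|/existsP [z /andP [hz hzb]]].
  by apply: (subsetP (ball_sub _ _ _)); apply: IH.
rewrite in_ballS; apply/orP; right; apply/existsP; exists (z, u).
by rewrite IH //= /cartprod /= hzb eqxx orbT.
Qed.

Lemma ballP_r b u j v : v \in ball e2 u j -> (b, v) \in ball eP (b, u) j.
Proof.
elim: j v => [|j IH] v; first by rewrite !ball0 !inE => /eqP ->.
rewrite in_ballS => /orP [hb|/existsP [z /andP [hz hzb]]].
  by apply: (subsetP (ball_sub _ _ _)); apply: IH.
rewrite in_ballS; apply/orP; right; apply/existsP; exists (b, z).
by rewrite IH //= /cartprod /= hzb eqxx.
Qed.

Lemma ballP_comb a u b v i j : b \in ball e1 a i -> v \in ball e2 u j ->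
  (b, v) \in ball eP (a, u) (i + j).
Proof. by move=> hb hv; apply: (ball_trans (ballP_l u hb) (ballP_r b hv)). Qed.

Lemma ballP_split a u n b v : (b, v) \in ball eP (a, u) n ->
  exists2 i, i <= n & (b \in ball e1 a i) && (v \in ball e2 u (n - i)).
Proof.
elim: n b v => [|n IH] b v.
  by rewrite ball0 inE => /eqP [-> ->]; exists 0 => //; rewrite !ball0 !inE !eqxx.
rewrite in_ballS => /orP [hb|/existsP [[z1 z2] /andP [hz hzb]]].
  have [i hi /andP [h1 h2]] := IH _ _ hb; exists i; first exact: leqW.
  rewrite h1 /=; apply: (subsetP (ball_mono _ _ _) _ h2).
  by rewrite subSn // leqnSn.
have [i hi /andP [h1 h2]] := IH _ _ hz.
move: hzb; rewrite /cartprod /= => /orP [/andP [/eqP hz1 he]|/andP [he /eqP hz2]].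
  subst z1; exists i; first exact: leqW.
  rewrite h1 subSn // in_ballS; apply/orP; right; apply/existsP; exists z2.
  by rewrite h2 he.
subst z2; exists i.+1 => //.
rewrite subSS h2 andbT in_ballS; apply/orP; right; apply/existsP; exists z1.
by rewrite h1 he.
Qed.

Hypothesis reach1 : forall x y : T1, exists n, y \in ball e1 x n.
Hypothesis reach2 : forall x y : T2, exists n, y \in ball e2 x n.

Lemma reachP : forall x y : T1 * T2, exists n, y \in ball eP x n.
Proof.
move=> [a u] [b v]; have [i hi] := reach1 a b; have [j hj] := reach2 u v.
by exists (i + j); apply: ballP_comb.
Qed.

Lemma distP a u b v : dist eP (a, u) (b, v) = dist e1 a b + dist e2 u v.
Proof.
apply/eqP; rewrite eqn_leq; apply/andP; split.
  rewrite (dist_le reachP); apply: ballP_comb.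
    by rewrite -(dist_le reach1).
  by rewrite -(dist_le reach2).
have := leqnn (dist eP (a, u) (b, v)); rewrite (dist_le reachP).
case/ballP_split => i hi /andP [h1 h2].
rewrite -(dist_le reach1) in h1; rewrite -(dist_le reach2) in h2.
by rewrite -(subnKC hi) leq_add.
Qed.

End Prod.

Section Main.
Variables T1 T2 : finType.
Variable e1 : rel T1.
Variable e2 : rel T2.
Notation eP := (cartprod e1 e2).
Hypothesis reach1 : forall x y : T1, exists n, y \in ball e1 x n.
Hypothesis reach2 : forall x y : T2, exists n, y \in ball e2 x n.

Lemma core (S : {set T1}) (S' : {set T2}) (X Y : {set T1 * T2}) a b s s' :
  X != set0 -> (a, b) \in Y -> (a, b) \notin X -> s \in S -> s' \in S' ->
  (forall x, x \in proj1s X -> x != a -> dist e1 s a < dist e1 s x) ->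
  (forall u, u \in proj2s X -> u != b -> dist e2 s' b < dist e2 s' u) ->
  separates eP (setX S S') X Y.
Proof.
move=> hX hY hnX hs hs' h1 h2.
apply: (@separates_pt _ _ _ _ _ (s, s') (a, b)) => //; first by rewrite inE /= hs hs'.
move=> [x u] hq; rewrite !(distP reach1 reach2).
have hx : x \in proj1s X by apply/imsetP; exists (x, u).
have hu : u \in proj2s X by apply/imsetP; exists (x, u).
have [hxa|hxa] := eqVneq x a.
  subst x; have hub : u != b by apply: contraNneq hnX => <-.
  by rewrite ltn_add2l h2.
have hlt := h1 _ hx hxa.
have [hub|hub] := eqVneq u b; first by subst u; rewrite ltn_add2r.
by apply: leq_trans (leq_add hlt (ltnW (h2 _ hu hub))); rewrite addSn.
Qed.


Lemma proj1_nz (X : {set T1 * T2}) : X != set0 -> proj1s X != set0.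
Proof. by case/set0Pn => x hx; apply/set0Pn; exists x.1; apply: imset_f. Qed.
Lemma proj2_nz (X : {set T1 * T2}) : X != set0 -> proj2s X != set0.
Proof. by case/set0Pn => x hx; apply/set0Pn; exists x.2; apply: imset_f. Qed.
Lemma proj1_card (X : {set T1 * T2}) : #|proj1s X| <= #|X|.
Proof. exact: leq_imset_card. Qed.
Lemma proj2_card (X : {set T1 * T2}) : #|proj2s X| <= #|X|.
Proof. exact: leq_imset_card. Qed.

Variable l : nat.
Variables (S : {set T1}) (S' : {set T2}).
Hypothesis hS : lresolving e1 l S.
Hypothesis hS' : lsolid e2 l S'.
Hypothesis hSn : S != set0.
Hypothesis hS'n : S' != set0.
Hypothesis hl : 0 < l.

Lemma pickH (X : {set T1 * T2}) b : #|X| <= l ->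
  exists2 s', s' \in S' & forall u, u \in proj2s X -> u != b -> dist e2 s' b < dist e2 s' u.
Proof.
move=> hX; apply: (pick_gen hS'n (lsol_P hS')).
by apply: leq_trans (subset_leq_card (subD1set _ _)) (leq_trans (proj2_card X) hX).
Qed.

Lemma case1 (X Y : {set T1 * T2}) s : s \in S -> X != set0 -> Y != set0 -> #|X| <= l ->
  dist_set e1 s (proj1s Y) < dist_set e1 s (proj1s X) -> separates eP (setX S S') X Y.
Proof.
move=> hs hX hY hXl hlt.
have [a [ha hae _]] := dist_set_wit e1 s (proj1_nz hY).
case/imsetP: ha => -[a' b] hab /= ha; subst a'.
have hsx : forall x, x \in proj1s X -> dist e1 s a < dist e1 s x.
  by move=> x hx; rewrite -hae; apply: leq_trans hlt (dist_set_le _ _ hx).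
have hnX : (a, b) \notin X.
  by apply/negP => h; have := hsx a (imset_f _ h); rewrite ltnn.
have [s' hs' hm] := pickH b hXl.
by apply: (core hX hab hnX hs hs' _ hm) => x hx _; apply: hsx.
Qed.

Lemma case2 (X Y : {set T1 * T2}) a b : X != set0 -> #|X| <= l -> proj1s X = proj1s Y ->
  (a, b) \in Y -> (a, b) \notin X -> separates eP (setX S S') X Y.
Proof.
move=> hX hXl hXY hab hnX.
have haX : a \in proj1s X by rewrite hXY; apply/imsetP; exists (a, b).
have hP : forall A a, A != set0 -> a \notin A -> #|A| <= l.-1 ->
     exists2 s, s \in S & forall x, x \in A -> dist e1 s a < dist e1 s x.
  by move=> A a' hA ha hAl; apply: (lres_P hS) => //; lia.
have hk : #|proj1s X :\ a| <= l.-1.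
  have := cardsD1 a (proj1s X); rewrite haX; have := proj1_card X; lia.
have [s hs hm] := pick_gen hSn hP hk.
have [s' hs' hm'] := pickH b hXl.
exact: (core hX hab hnX hs hs' hm hm').
Qed.

Lemma part2 : lresolving eP l (setX S S').
Proof.
apply/forallP => X; apply/forallP => Y; apply/implyP => /and5P [hX hY hXY hXl hYl].
have [hp|hp] := eqVneq (proj1s X) (proj1s Y).
  move: hXY; rewrite eqEsubset negb_and => /orP [/subsetPn [p hpX hpY]|/subsetPn [p hpY hpX]].
    rewrite separatesC; case: p hpX hpY => a b hpX hpY.
    exact: (case2 hY hYl (esym hp) hpX hpY).
  case: p hpX hpY => a b hpX hpY.
  exact: (case2 hX hXl hp hpY hpX).
have := lres_app hS (proj1_nz hX) (proj1_nz hY) hp (leq_trans (proj1_card X) hXl)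
   (leq_trans (proj1_card Y) hYl).
case/existsP => s /andP [hs hne].
case: (ltngtP (dist_set e1 s (proj1s X)) (dist_set e1 s (proj1s Y))) => h.
- by rewrite separatesC; apply: (case1 hs hY hX hYl h).
- exact: (case1 hs hX hY hXl h).
- by rewrite h eqxx in hne.
Qed.

End Main.

Section P1.
Variables T1 T2 : finType.
Variable e1 : rel T1.
Variable e2 : rel T2.
Notation eP := (cartprod e1 e2).
Hypothesis reach1 : forall x y : T1, exists n, y \in ball e1 x n.
Hypothesis reach2 : forall x y : T2, exists n, y \in ball e2 x n.

Lemma dsX1 s1 s2 (X : {set T1}) h : X != set0 ->
  dist_set eP (s1, s2) (setX X [set h]) = dist_set e1 s1 X + dist e2 s2 h.
Proof.
move=> hX; have [x [hx hxe hm]] := dist_set_wit e1 s1 hX.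
rewrite (@dist_set_eq _ _ _ _ (x, h)).
- by rewrite (distP reach1 reach2) hxe.
- by rewrite !inE /= hx eqxx.
move=> [y v]; rewrite !inE /= => /andP [hy /eqP ->].
by rewrite !(distP reach1 reach2) leq_add2r hm.
Qed.

Lemma dsX2 s1 s2 (X : {set T2}) g : X != set0 ->
  dist_set eP (s1, s2) (setX [set g] X) = dist e1 s1 g + dist_set e2 s2 X.
Proof.
move=> hX; have [x [hx hxe hm]] := dist_set_wit e2 s2 hX.
rewrite (@dist_set_eq _ _ _ _ (g, x)).
- by rewrite (distP reach1 reach2) hxe.
- by rewrite !inE /= hx eqxx.
move=> [y v]; rewrite !inE /= => /andP [/eqP -> hy].
by rewrite !(distP reach1 reach2) leq_add2l hm.
Qed.

Lemma part1a l (S : {set T1 * T2}) (h : T2) : lresolving eP l S -> lresolving e1 l (proj1s S).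
Proof.
move=> hS; apply/forallP => X; apply/forallP => Y; apply/implyP => /and5P [hX hY hXY hXl hYl].
have nz : forall Z : {set T1}, Z != set0 -> setX Z [set h] != set0.
  by move=> Z /set0Pn [x hx]; apply/set0Pn; exists (x, h); rewrite !inE /= hx eqxx.
have hne : setX X [set h] != setX Y [set h].
  apply: contra hXY => /eqP hE; apply/eqP/setP => x.
  by move: hE => /setP /(_ (x, h)); rewrite !inE /= eqxx !andbT.
have := lres_app hS (nz _ hX) (nz _ hY) hne; rewrite !cardsX !cards1 !muln1 => /(_ hXl hYl).
case/existsP => -[s1 s2] /andP [hs hd]; apply/existsP; exists s1.
rewrite (imset_f (fun x : T1 * T2 => x.1) hs) /=.
by apply: contra hd => /eqP he; rewrite !dsX1 // he.
Qed.

Lemma part1b l (S : {set T1 * T2}) (g : T1) : lresolving eP l S -> lresolving e2 l (proj2s S).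
Proof.
move=> hS; apply/forallP => X; apply/forallP => Y; apply/implyP => /and5P [hX hY hXY hXl hYl].
have nz : forall Z : {set T2}, Z != set0 -> setX [set g] Z != set0.
  by move=> Z /set0Pn [x hx]; apply/set0Pn; exists (g, x); rewrite !inE /= hx eqxx.
have hne : setX [set g] X != setX [set g] Y.
  apply: contra hXY => /eqP hE; apply/eqP/setP => x.
  by move: hE => /setP /(_ (g, x)); rewrite !inE /= eqxx.
have := lres_app hS (nz _ hX) (nz _ hY) hne; rewrite !cardsX !cards1 !mul1n => /(_ hXl hYl).
case/existsP => -[s1 s2] /andP [hs hd]; apply/existsP; exists s2.
rewrite (imset_f (fun x : T1 * T2 => x.2) hs) /=.
by apply: contra hd => /eqP he; rewrite !dsX2 // he.
Qed.

Definition sw12 (q : T1 * T2) : T2 * T1 := (q.2, q.1).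
Definition sw21 (q : T2 * T1) : T1 * T2 := (q.2, q.1).

Lemma sw12_inj : injective sw12. Proof. by move=> [? ?] [? ?] [-> ->]. Qed.

Lemma sw_inv (Z : {set T1 * T2}) : sw21 @: (sw12 @: Z) = Z.
Proof.
apply/setP => q; apply/imsetP/idP => [[x /imsetP [y hy ->] ->]|hq]; first by case: y hy.
by exists (sw12 q); [apply: imset_f | case: q hq].
Qed.

Lemma dsSw (s : T2 * T1) (X : {set T1 * T2}) : X != set0 ->
  dist_set (cartprod e2 e1) s (sw12 @: X) = dist_set eP (sw21 s) X.
Proof.
move=> hX; have [x [hx hxe hm]] := dist_set_wit eP (sw21 s) hX.
rewrite hxe (@dist_set_eq _ _ _ _ (sw12 x)).
- by case: s {hxe hm} => a u; case: x hx => b v _ /=; rewrite (distP reach2 reach1) (distP reach1 reach2) addnC.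
- exact: imset_f.
move=> y /imsetP [q hq ->]; have := hm q hq.
case: s {hxe hm} => a u; case: x hx => b v _; case: q hq => c w _ /=.
by rewrite !(distP reach2 reach1) !(distP reach1 reach2) [dist e2 _ v + _]addnC [dist e2 _ w + _]addnC.
Qed.

Lemma swapT l (W : {set T2 * T1}) : lresolving (cartprod e2 e1) l W -> lresolving eP l (sw21 @: W).
Proof.
move=> hW; apply/forallP => X; apply/forallP => Y; apply/implyP => /and5P [hX hY hXY hXl hYl].
have nz : forall Z : {set T1 * T2}, Z != set0 -> sw12 @: Z != set0.
  by move=> Z /set0Pn [x hx]; apply/set0Pn; exists (sw12 x); apply: imset_f.
have hne : sw12 @: X != sw12 @: Y.
  by apply: contra hXY => /eqP h; rewrite -(sw_inv X) h sw_inv.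
have := lres_app hW (nz _ hX) (nz _ hY) hne; rewrite !(card_imset _ sw12_inj) => /(_ hXl hYl).
case/existsP => s /andP [hs hd]; apply/existsP; exists (sw21 s).
rewrite (imset_f sw21 hs) /=.
by rewrite -!dsSw.
Qed.

End P1.

Section Beta.
Variable T : finType.
Variable e : rel T.

Lemma reach_of_conn : gconnected e -> forall x y : T, exists n, y \in ball e x n.
Proof.
move=> hc x y; have /connectP [p hp ->] := hc x y.
elim: p x hp => [|z p IH] x /=; first by exists 0; rewrite ball0 inE.
case/andP => hxz hp; have [n hn] := IH z hp.
by exists (1 + n); apply: ball_trans (ball_step hxz) hn.
Qed.

Lemma beta_le l (S : {set T}) : lresolving e l S -> beta e l <= #|S|.
Proof. by move=> h; apply: (@bigmin_le_nat _ (fun S => lresolving e l S) (fun S : {set T} => #|S|)). Qed.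

Lemma beta_s_le l (S : {set T}) : lsolid e l S -> beta_s e l <= #|S|.
Proof. by move=> h; apply: (@bigmin_le_nat _ (fun S => lsolid e l S) (fun S : {set T} => #|S|)). Qed.

Lemma beta_wit l : lresolving e l setT -> exists2 S, lresolving e l S & beta e l = #|S|.
Proof.
move=> h; have hc : #|[set: T]| <= #|T|.+1 by rewrite cardsT.
have [S [h1 h2 _]] := @bigmin_wit _ (fun S => lresolving e l S) (fun S : {set T} => #|S|) #|T|.+1 setT h hc.
by exists S.
Qed.

Lemma beta_s_wit l : lsolid e l setT -> exists2 S, lsolid e l S & beta_s e l = #|S|.
Proof.
move=> h; have hc : #|[set: T]| <= #|T|.+1 by rewrite cardsT.
have [S [h1 h2 _]] := @bigmin_wit _ (fun S => lsolid e l S) (fun S : {set T} => #|S|) #|T|.+1 setT h hc.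
by exists S.
Qed.

Hypothesis reach : forall x y : T, exists n, y \in ball e x n.

Lemma setT_sep (X Y : {set T}) : X != set0 -> Y != set0 -> X != Y -> separates e setT X Y.
Proof.
have key : forall X Y : {set T}, X != set0 -> forall p, p \in Y -> p \notin X -> separates e setT X Y.
  move=> X' Y' hX p hp hpX; apply: (separates_pt (in_setT p) hX hp).
  move=> q hq; have := dist_eq0 reach p p; rewrite eqxx => /eqP ->.
  by rewrite lt0n dist_eq0 //; apply: contraNneq hpX => ->.
move=> hX hY; rewrite eqEsubset negb_and => /orP [/subsetPn [p hpX hpY]|/subsetPn [p hpY hpX]].
  by rewrite separatesC; apply: (key _ _ hY p).
exact: (key _ _ hX p).
Qed.

Lemma setT_res l : lresolving e l setT.
Proof.
apply/forallP => X; apply/forallP => Y; apply/implyP => /and5P [hX hY hXY _ _].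
exact: setT_sep.
Qed.

Lemma setT_sol l : lsolid e l setT.
Proof.
apply/forallP => X; apply/forallP => Y; apply/implyP => /and4P [hX hY hXY _].
exact: setT_sep.
Qed.
End Beta.

Lemma nz_res (T : finType) (e : rel T) l (S : {set T}) : 1 < #|T| -> 0 < l -> lresolving e l S -> S != set0.
Proof.
move=> hT hl hS; have [X [Y [hX hY hXY hx hy]]] := two_sets hT.
exact: (sep_nz (lres_app hS hX hY hXY (leq_trans hx hl) (leq_trans hy hl))).
Qed.

Lemma nz_sol (T : finType) (e : rel T) l (S : {set T}) : 1 < #|T| -> 0 < l -> lsolid e l S -> S != set0.
Proof.
move=> hT hl hS; have [X [Y [hX hY hXY hx hy]]] := two_sets hT.
exact: (sep_nz (lsol_app hS hX hY hXY (leq_trans hx hl))).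
Qed.
Unset Implicit Arguments. Set Strict Implicit. Set Printing Implicit Defensive.

Theorem mainTheorem9 (T1 T2 : finType) (e1 : rel T1) (e2 : rel T2) (l : nat) :
  simple_graph e1 -> simple_graph e2 -> gconnected e1 -> gconnected e2 ->
  1 < #|T1| -> 1 < #|T2| -> 2 <= l ->
  [/\ (forall S : {set T1 * T2}, lresolving (cartprod e1 e2) l S ->
          lresolving e1 l (proj1s S) /\ lresolving e2 l (proj2s S)),
      (forall (S : {set T1}) (S' : {set T2}),
          lresolving e1 l S -> lsolid e2 l S' -> lresolving (cartprod e1 e2) l (setX S S')),
      (forall (S : {set T2}) (S' : {set T1}),
          lresolving e2 l S -> lsolid e1 l S' -> lresolving (cartprod e1 e2) l (setX S' S))
    & maxn (beta e1 l) (beta e2 l) <= beta (cartprod e1 e2) l /\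
      beta (cartprod e1 e2) l <= minn (beta e1 l * beta_s e2 l) (beta_s e1 l * beta e2 l)].
Proof.
move=> _ _ hc1 hc2 hT1 hT2 hl.
have r1 := reach_of_conn hc1; have r2 := reach_of_conn hc2.
have rP := reachP r1 r2.
have hl0 : 0 < l by apply: leq_trans hl.
have [g _] : exists g : T1, true by case/card_gt1P: hT1 => x _; exists x.
have [h _] : exists h : T2, true by case/card_gt1P: hT2 => x _; exists x.
have P1 : forall S : {set T1 * T2}, lresolving (cartprod e1 e2) l S ->
          lresolving e1 l (proj1s S) /\ lresolving e2 l (proj2s S).
  by move=> S hS; split; [apply: (part1a r1 r2 h) | apply: (part1b r1 r2 g)].
have P2 : forall (S : {set T1}) (S' : {set T2}),
          lresolving e1 l S -> lsolid e2 l S' -> lresolving (cartprod e1 e2) l (setX S S').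
  move=> S S' hS hS'.
  exact: (part2 r1 r2 hS hS' (nz_res hT1 hl0 hS) (nz_sol hT2 hl0 hS') hl0).
have P3 : forall (S : {set T2}) (S' : {set T1}),
          lresolving e2 l S -> lsolid e1 l S' -> lresolving (cartprod e1 e2) l (setX S' S).
  move=> S S' hS hS'.
  have := swapT r1 r2 (part2 r2 r1 hS hS' (nz_res hT2 hl0 hS) (nz_sol hT1 hl0 hS') hl0).
  congr (is_true (lresolving _ _ _)); apply/setP => -[x y]; rewrite inE /=.
  apply/imsetP/andP => [[[a b]]|[hx hy]]; first by rewrite inE /= => /andP [ha hb] [-> ->].
  by exists (y, x); rewrite ?inE ?hx ?hy.
split => //; split.
  have [SP hSP ->] := beta_wit (setT_res rP l).
  have [h1 h2] := P1 _ hSP.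
  rewrite geq_max; apply/andP; split.
    by apply: leq_trans (beta_le h1) _; apply: leq_imset_card.
  by apply: leq_trans (beta_le h2) _; apply: leq_imset_card.
have [S1 hS1 ->] := beta_wit (setT_res r1 l).
have [S2 hS2 ->] := beta_wit (setT_res r2 l).
have [Q1 hQ1 ->] := beta_s_wit (setT_sol r1 l).
have [Q2 hQ2 ->] := beta_s_wit (setT_sol r2 l).
rewrite leq_min; apply/andP; split.
  by rewrite -cardsX; apply: beta_le; apply: P2.
by rewrite -cardsX; apply: beta_le; apply: P3.
Qed.
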